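(* Assume the following setting. For each $n$, $X\in\mathbb{R}^{n\times e}$ is deterministic with rows $x_i$; $\Gamma\in\mathbb{R}^{e\times p}$, $\sigma^2>0$, $\sigma_z^2>0$, $e,p$ are fixed; $\lambda\ge0$ and $\beta_0\in\mathbb{R}^e$ depend on $n$. Let $y=X\beta_0+\epsilon$, $Z=X\Gamma+E$, with entries of $E$ i.i.d. $N(0,\sigma_z^2)$, entries of $\epsilon$ i.i.d. $N(0,\sigma^2)$, $E,\epsilon$ independent. Assume as $n\to\infty$: $\lambda/n\to\kappa\ge0$; $\sqrt n\beta_0\to\alpha_0$; $\frac1nX^TX\to\Sigma$ positive definite; $\frac1n\mathbf{1}^TX\to\Theta\in\mathbb{R}^{1\times e}$; $\max_i\|x_i\|=o(n^{1/3})$. Let $\tilde Z=[\mathbf{1},Z]\in\mathbb{R}^{n\times(p+1)}$, and let $\tilde Z_{(i)}$, $X_{(i)}$ be $\tilde Z$, $X$ with their $i$-th rows removed. Then as $n\to\infty$, $\|\tilde Z^TX\|=O_P(n)$ and $$\max_{1\le i\le n}\|\tilde Z^TX-\tilde Z_{(i)}^TX_{(i)}\|=o_P(n).$$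
   Context: $\|M\|$ denotes the $\ell^2$ operator norm of a matrix $M$; $O_P,o_P$ refer to $n\to\infty$. *)

(* Defs.v *)
From HB Require Import structures.
From mathcomp Require Import all_boot all_order all_algebra.
From mathcomp Require Import all_classical all_reals all_analysis.
Set Implicit Arguments. Unset Strict Implicit. Unset Printing Implicit Defensive.
Import Order.TTheory GRing.Theory Num.Theory.
Import numFieldNormedType.Exports.
Local Open Scope classical_set_scope.
Local Open Scope ring_scope.

Definition vnorm {R : realType} {k : nat} (v : 'cV[R]_k) : R :=
  Num.sqrt (\sum_(j < k) v j 0 ^+ 2).

Definition rnorm {R : realType} {k : nat} (v : 'rV[R]_k) : R :=
  Num.sqrt (\sum_(j < k) v 0 j ^+ 2).

Definition opnorm {R : realType} {m k : nat} (A : 'M[R]_(m, k)) : R :=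
  sup [set vnorm (A *m v) | v in [set v : 'cV[R]_k | vnorm v <= 1]].

Definition posdef {R : realType} {k : nat} (S : 'M[R]_k) : Prop :=
  S^T = S /\ forall v : 'cV[R]_k, v != 0 -> 0 < (v^T *m S *m v) 0 0.

Definition mutually_independent d (T : measurableType d) (R : realType)
    (P : probability T R) (I : finType) (Y : I -> {RV P >-> R}) : Prop :=
  forall (J : {set I}) (B : I -> set R), (forall i, measurable (B i)) ->
    P (\bigcap_(i in [set i | i \in J]) (Y i @^-1` B i)) =
    (\prod_(i in J) P (Y i @^-1` B i))%E.

Definition OP_bound d (T : measurableType d) (R : realType) (P : probability T R)
    (Y : nat -> T -> R) (r : nat -> R) : Prop :=
  forall delta : R, 0 < delta -> exists M : R, 0 < M /\
    \forall n \near \oo, (P [set w | (M * r n < Y n w)%R] <= delta%:E)%E.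

Definition oP_bound d (T : measurableType d) (R : realType) (P : probability T R)
    (Y : nat -> T -> R) (r : nat -> R) : Prop :=
  forall eps delta : R, 0 < eps -> 0 < delta ->
    \forall n \near \oo, (P [set w | (eps * r n < Y n w)%R] <= delta%:E)%E.

Definition Emat d (T : measurableType d) (R : realType) (P : probability T R)
    (n p : nat) (E : 'I_n -> 'I_p -> {RV P >-> R}) (w : T) : 'M[R]_(n, p) :=
  \matrix_(i, j) E i j w.

Definition Ztilde {R : realType} (n e p : nat) (X : 'M[R]_(n, e))
    (Gamma : 'M[R]_(e, p)) (Em : 'M[R]_(n, p)) : 'M[R]_(n, 1 + p) :=
  row_mx (const_mx 1) (X *m Gamma + Em).

(* Main.v *)
Require Import Defs.
From HB Require Import structures.
From mathcomp Require Import all_boot all_order all_algebra.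
From mathcomp Require Import all_classical all_reals all_analysis.
From mathcomp Require Import measurable_realfun.
From mathcomp Require Import ring lra.
Import Order.TTheory GRing.Theory Num.Theory.
Import numFieldNormedType.Exports.
Local Open Scope classical_set_scope.
Local Open Scope ring_scope.
Section LinAlg.
Variable R : realType.

Definition sqF {m k : nat} (A : 'M[R]_(m, k)) : R :=
  \sum_(i < m) \sum_(j < k) A i j ^+ 2.

Lemma sqF_ge0 m k (A : 'M[R]_(m, k)) : 0 <= sqF A.
Proof. by apply: sumr_ge0 => i _; apply: sumr_ge0 => j _; exact: sqr_ge0. Qed.

Lemma sum_prod k l (f : 'I_k -> R) (g : 'I_l -> R) :
  \sum_i \sum_j f i * g j = (\sum_i f i) * (\sum_j g j).
Proof. by rewrite mulr_suml; apply: eq_bigr => i _; rewrite mulr_sumr. Qed.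

Lemma CS k (a b : 'I_k -> R) :
  (\sum_i a i * b i) ^+ 2 <= (\sum_i a i ^+ 2) * (\sum_i b i ^+ 2).
Proof.
have H : 0 <= \sum_i \sum_j (a i * b j - a j * b i) ^+ 2.
  by apply: sumr_ge0 => i _; apply: sumr_ge0 => j _; exact: sqr_ge0.
have E1 : forall i j, (a i * b j - a j * b i) ^+ 2 =
     a i ^+ 2 * b j ^+ 2 + b i ^+ 2 * a j ^+ 2 - 2 * ((a i * b i) * (a j * b j)).
  by move=> i j; ring.
have E : \sum_i \sum_j (a i * b j - a j * b i) ^+ 2 =
   2 * ((\sum_i a i ^+ 2) * (\sum_i b i ^+ 2)) - 2 * (\sum_i a i * b i) ^+ 2.
  under eq_bigr do under eq_bigr do rewrite E1.
  under eq_bigr do rewrite sumrB big_split /= -mulr_sumr.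
  rewrite sumrB big_split /= -mulr_suml sum_prod.
  under [X in _ - X = _]eq_bigr do rewrite -mulr_sumr.
  rewrite -mulr_sumr sum_prod expr2; ring.
lra.
Qed.
End LinAlg.
Arguments sqF {R m k}.
Section LinAlg2.
Variable R : realType.

Lemma vnormE k (v : 'cV[R]_k) : vnorm v = Num.sqrt (\sum_j v j 0 ^+ 2).
Proof. by []. Qed.

Lemma vnorm_ge0 k (v : 'cV[R]_k) : 0 <= vnorm v.
Proof. exact: sqrtr_ge0. Qed.

Lemma vnorm_mul_le m k (A : 'M[R]_(m, k)) v :
  vnorm (A *m v) <= Num.sqrt (sqF A) * vnorm v.
Proof.
rewrite /vnorm -sqrtrM ?sqF_ge0 // ler_sqrt; last first.
  by apply: mulr_ge0; [exact: sqF_ge0|apply: sumr_ge0 => j _; exact: sqr_ge0].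
rewrite /sqF mulr_suml; apply: ler_sum => i _; rewrite mxE; exact: CS.
Qed.

Lemma opnorm_le m k (A : 'M[R]_(m, k)) : opnorm A <= Num.sqrt (sqF A).
Proof.
apply: ge_sup.
  exists (vnorm (A *m 0)); exists 0 => //=.
  by rewrite /vnorm big1 ?sqrtr0 // => j _; rewrite mxE expr0n.
move=> x [v /= hv <-]; rewrite (le_trans (@vnorm_mul_le _ _ A v))//.
by rewrite -[leRHS]mulr1 ler_wpM2l // sqrtr_ge0.
Qed.

Lemma opnorm_ub m k (A : 'M[R]_(m, k)) :
  has_ubound [set vnorm (A *m v) | v in [set v : 'cV[R]_k | vnorm v <= 1]].
Proof.
exists (Num.sqrt (sqF A)) => x [v /= hv <-]; apply: le_trans (@vnorm_mul_le _ _ A v) _.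
by rewrite -[leRHS]mulr1 ler_wpM2l // sqrtr_ge0.
Qed.

Lemma opnorm_ge0 m k (A : 'M[R]_(m, k)) : 0 <= opnorm A.
Proof.
have v0 : forall l, vnorm (0 : 'cV[R]_l) = 0.
  by move=> l; rewrite /vnorm big1 ?sqrtr0 // => j _; rewrite mxE expr0n.
have -> : (0 : R) = vnorm (A *m 0) by rewrite mulmx0 v0.
have hs : has_sup [set vnorm (A *m v) | v in [set v : 'cV[R]_k | vnorm v <= 1]].
  split; last exact: opnorm_ub.
  by exists (vnorm (A *m 0)); exists 0 => //=; rewrite v0.
apply: (sup_upper_bound hs).
by exists 0 => //=; rewrite v0.
Qed.

Lemma sqF_tr m k (A : 'M[R]_(m, k)) : sqF A^T = sqF A.
Proof. by rewrite /sqF exchange_big; apply: eq_bigr => i _; apply: eq_bigr => j _; rewrite mxE. Qed.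

Lemma sqF_mul m k l (A : 'M[R]_(m, k)) (B : 'M[R]_(k, l)) :
  sqF (A *m B) <= sqF A * sqF B.
Proof.
rewrite /sqF [X in _ <= _ * X]exchange_big /= -sum_prod.
apply: ler_sum => i _; apply: ler_sum => j _; rewrite mxE; exact: CS.
Qed.

Lemma sqF_add m k (A B : 'M[R]_(m, k)) : sqF (A + B) <= 2 * sqF A + 2 * sqF B.
Proof.
rewrite /sqF !mulr_sumr -big_split /=; apply: ler_sum => i _.
rewrite !mulr_sumr -big_split /=; apply: ler_sum => j _; rewrite mxE.
have := sqr_ge0 (A i j - B i j); lra.
Qed.

End LinAlg2.
Section LinAlg3.
Variable R : realType.

Lemma sqF_Ztilde n e p (X : 'M[R]_(n, e)) (G : 'M[R]_(e, p)) (Em : 'M[R]_(n, p)) :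
  sqF (Ztilde X G Em) = n%:R + sqF (X *m G + Em).
Proof.
rewrite /sqF /Ztilde.
under eq_bigr do rewrite big_split_ord /= big_ord1 row_mxEl mxE expr1n.
rewrite big_split /= sumr_const card_ord; congr (_ + _).
by apply: eq_bigr => i _; apply: eq_bigr => j _; rewrite row_mxEr.
Qed.

Lemma outer_diff n q e (Z : 'M[R]_(n, q)) (X : 'M[R]_(n, e)) (i : 'I_n) :
  Z^T *m X - (row' i Z)^T *m row' i X = (row i Z)^T *m row i X.
Proof.
apply/matrixP => a b; rewrite !mxE (bigD1_ord i) //= big_ord1.
rewrite [X in _ - X](eq_bigr (fun j => Z^T a (lift i j) * X (lift i j) b)); last first.
  by move=> j _; rewrite !mxE.
by rewrite addrK !mxE.
Qed.

Lemma sqF_row n q (Z : 'M[R]_(n, q)) (i : 'I_n) : sqF (row i Z) <= sqF Z.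
Proof.
rewrite /sqF big_ord1 (bigD1 i) //=.
under [X in X <= _]eq_bigr do rewrite mxE.
rewrite lerDl.
apply: sumr_ge0 => k _; apply: sumr_ge0 => j _; exact: sqr_ge0.
Qed.

Lemma rnorm_sq e (x : 'rV[R]_e) : rnorm x ^+ 2 = sqF x.
Proof.
rewrite /rnorm /sqF big_ord1 sqr_sqrtr //.
apply: sumr_ge0 => j _; exact: sqr_ge0.
Qed.

Lemma rnorm_ge0 e (x : 'rV[R]_e) : 0 <= rnorm x.
Proof. exact: sqrtr_ge0. Qed.
End LinAlg3.
Arguments sqF_ge0 {R m k}.
Arguments sqF_add {R m k}.
Arguments sqF_mul {R m k l}.
Arguments sqF_tr {R m k}.
Arguments sqF_row {R n q}.
Arguments rnorm_sq {R e}.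
Arguments rnorm_ge0 {R e}.
Arguments opnorm_le {R m k}.
Arguments outer_diff {R n q e}.
Arguments sqF_Ztilde {R n e p}.
Section Approx.
Variable R : realType.

Definition Ssq {k : nat} (x : 'cV[R]_k) : R := \sum_(j < k) x j 0 ^+ 2.

Lemma Ssq_ge0 k (x : 'cV[R]_k) : 0 <= Ssq x.
Proof. by apply: sumr_ge0 => j _; exact: sqr_ge0. Qed.

Lemma cvg_Ssq m k (B : 'M[R]_(m, k)) (f : nat -> 'cV[R]_k) (u : 'cV[R]_k) :
  (forall j, (fun N => f N j 0) @ \oo --> u j 0) ->
  (fun N => Ssq (B *m f N)) @ \oo --> Ssq (B *m u).
Proof.
move=> hf; rewrite /Ssq.
have E : forall (v : 'cV[R]_k) i, (B *m v) i 0 = \sum_j B i j * v j 0.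
  by move=> v i; rewrite mxE.
under eq_fun do under eq_bigr do rewrite E.
rewrite (eq_bigr (fun i => (\sum_j B i j * u j 0) ^+ 2)); last by move=> i _; rewrite E.
apply: cvg_big => //; first exact: add_continuous.
move=> i _; rewrite expr2.
under eq_fun do rewrite expr2.
have hi : (fun N => \sum_j B i j * f N j 0) @ \oo --> \sum_j B i j * u j 0.
  apply: cvg_big => //; first exact: add_continuous.
  move=> j _; apply: cvgM; [exact: cvg_cst|exact: hf].
exact: cvgM.
Qed.

End Approx.
Arguments Ssq {R k}.
Section Approx2.
Variable R : realType.

Definition qv {k : nat} (z : 'cV[int]_k * nat) : 'cV[R]_k :=
  (z.2.+1%:R)^-1 *: map_mx (fun x : int => x%:~R) z.1.

Lemma floor_cvg (x : R) :
  (fun N : nat => (N.+1%:R)^-1 * (Num.floor (x * N.+1%:R))%:~R) @ \oo --> x.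
Proof.
apply/cvgrPdist_lt => eps eps0.
near=> N.
have hN : 0 < N.+1%:R :> R by rewrite ltr0n.
have h1 := floor_le (x * N.+1%:R).
have h2 := floorD1_gt (x * N.+1%:R).
rewrite intrD in h2.
set a := (Num.floor (x * N.+1%:R))%:~R in h1 h2 *.
have e1 : x - (N.+1%:R)^-1 * a = (N.+1%:R)^-1 * (x * N.+1%:R - a).
  by field; rewrite gt_eqF.
rewrite e1 normrM ger0_norm ?invr_ge0 ?ler0n // ger0_norm ?subr_ge0 //.
have : N.+1%:R^-1 < eps.
  near: N; exact: (near_infty_natSinv_lt (PosNum eps0)).
have : x * N.+1%:R - a < 1 by lra.
move=> hb he.
rewrite (le_lt_trans _ he) // -[leRHS]mulr1 ler_wpM2l ?invr_ge0 ?ler0n //.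
exact: ltW.
Unshelve. all: end_near.
Qed.

Lemma approx m k (A : 'M[R]_(m, k)) (u : 'cV[R]_k) c :
  Ssq u < 1 -> c < Ssq (A *m u) ->
  exists z : 'cV[int]_k * nat, Ssq (qv z) < 1 /\ c < Ssq (A *m qv z).
Proof.
move=> hu hc.
pose f N : 'cV[R]_k := qv (map_mx (fun x => Num.floor (x * N.+1%:R)) u, N).
have hf : forall j, (fun N => f N j 0) @ \oo --> u j 0.
  move=> j; rewrite /f /qv.
  under eq_fun do rewrite !mxE.
  exact: floor_cvg.
have c1 : (fun N => Ssq (f N)) @ \oo --> Ssq u.
  have := @cvg_Ssq R _ _ (1%:M : 'M[R]_k) _ _ hf.
  by rewrite mul1mx; under eq_fun do rewrite mul1mx.
have c2 := @cvg_Ssq R _ _ A _ _ hf.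
have h : \forall N \near \oo, Ssq (f N) < 1 /\ c < Ssq (A *m f N).
  near=> N; split; near: N; [exact: (cvgr_lt _ c1 _ hu) | exact: (cvgr_gt _ c2 _ hc)].
have [N [HN1 HN2]] := filter_ex h.
by exists (map_mx (fun x => Num.floor (x * N.+1%:R)) u, N).
Unshelve. all: end_near.
Qed.

End Approx2.
Section Meas.
Context d (T : measurableType d) (R : realType).

Definition mmeas {m k} (A : T -> 'M[R]_(m, k)) :=
  forall i j, measurable_fun setT (fun w => A w i j).

Lemma mmeas_cst m k (M : 'M[R]_(m, k)) : mmeas (fun _ => M).
Proof. by move=> i j; exact: measurable_cst. Qed.

Lemma mmeas_add m k (A B : T -> 'M[R]_(m, k)) :
  mmeas A -> mmeas B -> mmeas (fun w => A w + B w).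
Proof.
move=> hA hB i j; under eq_fun do rewrite mxE; exact: measurable_realfun.measurable_funD.
Qed.

Lemma mmeas_opp m k (A : T -> 'M[R]_(m, k)) :
  mmeas A -> mmeas (fun w => - A w).
Proof.
move=> hA i j; under eq_fun do rewrite mxE; exact: measurableT_comp.
Qed.

Lemma mmeas_mul m k l (A : T -> 'M[R]_(m, k)) (B : T -> 'M[R]_(k, l)) :
  mmeas A -> mmeas B -> mmeas (fun w => A w *m B w).
Proof.
move=> hA hB i j; under eq_fun do rewrite mxE.
apply: measurable_sum => t; exact: measurable_realfun.measurable_funM.
Qed.

Lemma mmeas_tr m k (A : T -> 'M[R]_(m, k)) : mmeas A -> mmeas (fun w => (A w)^T).
Proof. by move=> hA i j; under eq_fun do rewrite mxE; exact: hA. Qed.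

Lemma mmeas_row m k (A : T -> 'M[R]_(m, k)) i0 : mmeas A -> mmeas (fun w => row i0 (A w)).
Proof. by move=> hA i j; under eq_fun do rewrite mxE; exact: hA. Qed.

Lemma mmeas_row' m k (A : T -> 'M[R]_(m, k)) i0 : mmeas A -> mmeas (fun w => row' i0 (A w)).
Proof. by move=> hA i j; under eq_fun do rewrite mxE; exact: hA. Qed.

Lemma mmeas_row_mx m k1 k2 (A : T -> 'M[R]_(m, k1)) (B : T -> 'M[R]_(m, k2)) :
  mmeas A -> mmeas B -> mmeas (fun w => row_mx (A w) (B w)).
Proof.
move=> hA hB i j; have -> : j = unsplit (fintype.split j) by rewrite splitK.
case: (fintype.split j) => j' /=.
  by under eq_fun do rewrite row_mxEl; exact: hA.
by under eq_fun do rewrite row_mxEr; exact: hB.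
Qed.

Lemma meas_gt (f : T -> R) c : measurable_fun setT f -> measurable [set w | c < f w].
Proof.
move=> mf; have := mf measurableT _ (measurable_itv `]c, +oo[); rewrite setTI.
congr measurable; apply/seteqP; split => w /=; rewrite in_itv /= andbT //.
Qed.

Lemma Ssq_meas m (A : T -> 'cV[R]_m) : mmeas A -> measurable_fun setT (fun w => Ssq (A w)).
Proof.
move=> hA; rewrite /Ssq; apply: measurable_sum => j.
under eq_fun do rewrite expr2; exact: measurable_realfun.measurable_funM.
Qed.

Lemma Ssq_scale k (t : R) (x : 'cV[R]_k) : Ssq (t *: x) = t ^+ 2 * Ssq x.
Proof. by rewrite /Ssq mulr_sumr; apply: eq_bigr => j _; rewrite mxE exprMn. Qed.

Lemma opnorm_gt_meas m k (A : T -> 'M[R]_(m, k)) c :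
  mmeas A -> 0 <= c -> measurable [set w | c < opnorm (A w)].
Proof.
move=> hA c0.
have -> : [set w | c < opnorm (A w)] =
  \bigcup_(z : 'cV[int]_k * nat) [set w | Ssq (qv R z) < 1 /\ c ^+ 2 < Ssq (A w *m qv R z)].
  apply/seteqP; split => w /=.
  - move=> hc.
    have ne : [set vnorm (A w *m v) | v in [set v : 'cV[R]_k | vnorm v <= 1]] !=set0.
      by exists (vnorm (A w *m 0)); exists 0 => //=; rewrite /vnorm big1 ?sqrtr0 // => j _; rewrite mxE expr0n.
    have [y [v hv <-] hy] := sup_gt ne hc.
    move: hv => /= hv.
    set g := vnorm (A w *m v) in hy.
    have g0 : 0 < g by apply: le_lt_trans hy.
    pose t := (c + g) / (2 * g).
    have t0 : 0 <= t by rewrite divr_ge0 // ?addr_ge0 ?mulr_ge0 // ltW.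
    have t1 : t < 1 by rewrite ltr_pdivrMr ?mulr_gt0 //; lra.
    have Sv : Ssq v <= 1.
      have -> : Ssq v = vnorm v ^+ 2 by rewrite sqr_sqrtr // Ssq_ge0.
      by rewrite expr_le1 // vnorm_ge0.
    have Sg : Ssq (A w *m v) = g ^+ 2 by rewrite sqr_sqrtr // Ssq_ge0.
    have hu : Ssq (t *: v) < 1.
      rewrite Ssq_scale (le_lt_trans (ler_wpM2l (sqr_ge0 t) Sv)) // mulr1.
      by rewrite expr_lt1.
    have hAu : c ^+ 2 < Ssq (A w *m (t *: v)).
      rewrite -scalemxAr Ssq_scale Sg -exprMn.
      have -> : t * g = (c + g) / 2 by rewrite /t; field; rewrite gt_eqF.
      rewrite ltr_pXn2r ?nnegrE //; first lra.
      by rewrite divr_ge0 // addr_ge0 // ltW.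
    have [z [hz1 hz2]] := @approx R _ _ _ _ _ hu hAu.
    by exists z.
  - move=> [z _ [hz1 hz2]].
    have hs : has_sup [set vnorm (A w *m v) | v in [set v : 'cV[R]_k | vnorm v <= 1]].
      split; last exact: opnorm_ub.
      by exists (vnorm (A w *m 0)); exists 0 => //=; rewrite /vnorm big1 ?sqrtr0 // => j _; rewrite mxE expr0n.
    apply: (lt_le_trans _ (sup_upper_bound hs _)); last first.
      exists (qv R z) => //=; rewrite /vnorm -/(Ssq (qv R z)) -sqrtr1 ler_sqrt //; exact: ltW.
    rewrite /vnorm -/(Ssq _) -(ger0_norm c0) -sqrtr_sqr ltr_sqrt //.
    by rewrite (le_lt_trans _ hz2) // sqr_ge0.
apply: countable_bigcupT_measurable; first exact: countableP.
move=> z /=; case: (ltrP (Ssq (qv R z)) 1) => hz.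
  have -> : [set w | true /\ c ^+ 2 < Ssq (A w *m qv R z)] =
            [set w | c ^+ 2 < Ssq (A w *m qv R z)].
    by apply/seteqP; split => w /=; [case|].
  apply: meas_gt; apply: Ssq_meas; apply: mmeas_mul => //; exact: mmeas_cst.
have -> : [set w | false /\ c ^+ 2 < Ssq (A w *m qv R z)] = set0.
  by apply/seteqP; split => w //= [].
exact: measurable0.
Qed.

End Meas.
Arguments mmeas {d T R m k}.
Section Normal.
Variable R : realType.
Local Open Scope ereal_scope.

Lemma pdf_bound (s x : R) : (0 < s)%R ->
  (x ^+ 2 * normal_pdf 0 s x <=
   (4 * s ^+ 2 * normal_peak s / normal_peak (Num.sqrt 2 * s)) *
     normal_pdf 0 (Num.sqrt 2 * s) x)%R.
Proof.
move=> s0.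
have s'0 : (Num.sqrt 2 * s != 0)%R by rewrite mulf_neq0 ?gt_eqF // sqrtr_gt0.
rewrite (normal_pdfE _ (lt0r_neq0 s0)) (normal_pdfE _ s'0).
have p0 := normal_peak_gt0 (lt0r_neq0 s0).
have p'0 := normal_peak_gt0 s'0.
rewrite /normal_fun !subr0.
set y := (x ^+ 2 / (4 * s ^+ 2))%R.
have y0 : (0 <= y)%R by rewrite divr_ge0 ?sqr_ge0 // mulr_ge0 // sqr_ge0.
have e1 : (- x ^+ 2 / (s ^+ 2 *+ 2) = - y + - y)%R.
  by rewrite /y; field; rewrite gt_eqF.
have e2 : (- x ^+ 2 / ((Num.sqrt 2 * s) ^+ 2 *+ 2) = - y)%R.
  by rewrite exprMn sqr_sqrtr ?ler0n // /y; field; rewrite lt0r_neq0.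
rewrite e1 e2 expRD.
have hy : (y * expR (- y) <= 1)%R.
  rewrite expRN ler_pdivrMr ?expR_gt0 // mul1r.
  by apply: le_trans (expR_ge1Dx y); rewrite lerDr.
have hx : (x ^+ 2 = 4 * s ^+ 2 * y)%R by rewrite /y; field; rewrite gt_eqF.
rewrite hx.
have E0 := expR_ge0 (- y).
have : (4 * s ^+ 2 * y * (normal_peak s * (expR (- y) * expR (- y))) =
        4 * s ^+ 2 * normal_peak s * expR (- y) * (y * expR (- y)))%R by ring.
move=> ->.
have : (4 * s ^+ 2 * normal_peak s / normal_peak (Num.sqrt 2 * s) *
   (normal_peak (Num.sqrt 2 * s) * expR (- y)) = 4 * s ^+ 2 * normal_peak s * expR (- y))%R.
  by field; rewrite gt_eqF.
move=> ->.
rewrite -[leRHS]mulr1 ler_wpM2l //.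
by rewrite !mulr_ge0 // ?sqr_ge0 // ltW.
Qed.

End Normal.
Section Normal2.
Variable R : realType.
Local Open Scope ereal_scope.

Lemma normal_m2 (s : R) : (0 < s)%R ->
  exists K : R, \int[normal_prob 0 s]_x ((x ^+ 2)%:E) <= K%:E.
Proof.
move=> s0.
set K := (4 * s ^+ 2 * normal_peak s / normal_peak (Num.sqrt 2 * s))%R.
exists K.
have numu : normal_prob 0 s `<< (@lebesgue_measure R) := normal_prob_dominates 0 s.
have mf : measurable_fun [set: R] (fun x : R => (x ^+ 2)%:E).
  by apply/measurable_EFinP; exact: measurable_funX.
rewrite -(Radon_Nikodym_SigmaFinite.change_of_variables numu _ measurableT mf); last first.
  by move=> x; rewrite lee_fin sqr_ge0.
set RN := Radon_Nikodym_SigmaFinite.f _ _.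
have ae : ae_eq (@lebesgue_measure R) setT (fun x => (normal_pdf 0 s x)%:E) RN.
  apply: integral_ae_eq => //.
  - exact: integrable_normal_pdf.
  - exact: measurable_int (Radon_Nikodym_SigmaFinite.f_integrable numu).
  - move=> E _ mE.
    by rewrite -Radon_Nikodym_SigmaFinite.f_integral.
pose sq := fun x : R => (x ^+ 2)%:E.
have ae2 : ae_eq (@lebesgue_measure R) setT (fun x => sq x * (normal_pdf 0 s x)%:E) (fun x => sq x * RN x).
  by apply: filterS ae => x /= h /h ->.
rewrite -(ae_eq_integral _ _ measurableT _ _ ae2); last 2 first.
- apply: emeasurable_funM => //.
  by apply/measurable_EFinP; exact: measurable_normal_pdf.
- apply: emeasurable_funM => //.
  exact: measurable_int (Radon_Nikodym_SigmaFinite.f_integrable numu).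
apply: (@le_trans _ _ (\int[lebesgue_measure]_x (K%:E * (normal_pdf 0 (Num.sqrt 2 * s) x)%:E))).
  apply: ge0_le_integral => //.
  - by move=> x _; rewrite /sq /= -EFinM lee_fin mulr_ge0 ?sqr_ge0 ?normal_pdf_ge0.
  - apply: emeasurable_funM => //.
    by apply/measurable_EFinP; exact: measurable_normal_pdf.
  - apply: emeasurable_funM => //.
    by apply/measurable_EFinP; exact: measurable_normal_pdf.
  - by move=> x _; rewrite /sq /= -!EFinM lee_fin; exact: pdf_bound.
rewrite integralZl //; last exact: integrable_normal_pdf.
by rewrite integral_normal_pdf mule1.
Qed.

End Normal2.
Section Prob.
Context d (T : measurableType d) (R : realType) (P : probability T R).
Local Open Scope ereal_scope.

Lemma rv_m2 (s K : R) (X : {RV P >-> R}) :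
  (forall A, measurable A -> distribution P X A = normal_prob 0 s A) ->
  \int[normal_prob 0 s]_x ((x ^+ 2)%:E) <= K%:E ->
  \int[P]_w (((X w) ^+ 2)%:E) <= K%:E.
Proof.
move=> hX hK.
pose sq := fun x : R => (x ^+ 2)%:E.
have mf : measurable_fun [set: R] sq.
  by apply/measurable_EFinP; exact: measurable_funX.
pose X' : T -> measurableTypeR R := X.
have mX' : measurable_fun setT X' := measurable_funPT X.
have mf' : measurable_fun [set: measurableTypeR R] (fun x : measurableTypeR R => sq x) := mf.
have := ge0_integral_pushforward mX' P measurableT mf'.
rewrite preimage_setT => <-; last by move=> y _; rewrite /sq lee_fin sqr_ge0.
rewrite (eq_measure_integral (normal_prob 0 s)) //.
by move=> A mA _; exact: hX.
Qed.

Lemma markov' (G : T -> R) (c B : R) : measurable_fun setT G ->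
  (forall w, (0 <= G w)%R) -> (0 < c)%R -> \int[P]_w (G w)%:E <= B%:E ->
  P [set w | (c < G w)%R] <= (c^-1 * B)%:E.
Proof.
move=> mG G0 c0 hB.
have mA : measurable [set w | (c < G w)%R] by exact: meas_gt.
rewrite EFinM lee_pdivlMl //.
apply: le_trans hB.
rewrite -integral_cst //.
apply: (@le_trans _ _ (\int[P]_(w in [set w | (c < G w)%R]) (G w)%:E)).
  apply: ge0_le_integral => //.
  - by move=> w _; rewrite lee_fin ltW.
  - by apply/measurable_EFinP; apply: measurable_funTS.
  - by move=> w /= hw; rewrite lee_fin ltW.
apply: ge0_subset_integral => //.
- by apply/measurable_EFinP.
- by move=> w _; rewrite lee_fin.
Qed.

End Prob.
Section Main.
Context d (T : measurableType d) (R : realType) (P : probability T R).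

Lemma P_mono (A B : set T) : measurable A -> measurable B -> A `<=` B ->
  (P A <= P B)%E.
Proof. by move=> mA mB AB; apply: le_measure => //; rewrite inE. Qed.

Lemma mmeas_Emat n p (E : 'I_n -> 'I_p -> {RV P >-> R}) : mmeas (Emat E).
Proof. by move=> i j; under eq_fun do rewrite mxE; exact: measurable_funPT. Qed.

Lemma mmeas_Z n e p (X : 'M[R]_(n, e)) (G : 'M[R]_(e, p)) (E : 'I_n -> 'I_p -> {RV P >-> R}) :
  mmeas (fun w => Ztilde X G (Emat E w)).
Proof.
apply: mmeas_row_mx; first exact: mmeas_cst.
apply: mmeas_add; first exact: mmeas_cst.
exact: mmeas_Emat.
Qed.

Lemma sqF_meas m k (A : T -> 'M[R]_(m, k)) : mmeas A ->
  measurable_fun setT (fun w => sqF (A w)).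
Proof.
move=> hA; apply: measurable_sum => i; apply: measurable_sum => j.
under eq_fun do rewrite expr2; exact: measurable_funM.
Qed.

Lemma G_int n p (E : 'I_n -> 'I_p -> {RV P >-> R}) (K : R) :
  (forall i j, (\int[P]_w (((E i j w) ^+ 2)%:E) <= K%:E)%E) ->
  (\int[P]_w ((sqF (Emat E w))%:E) <= (n%:R * p%:R * K)%:E)%E.
Proof.
move=> hK; rewrite /sqF.
under eq_integral do rewrite -sumEFin.
rewrite ge0_integral_sum //; last 2 first.
- move=> i; apply/measurable_EFinP; apply: measurable_sum => j.
  under eq_fun do rewrite expr2; apply: measurable_funM; under eq_fun do rewrite mxE; exact: measurable_funPT.
- by move=> i w _; rewrite lee_fin; apply: sumr_ge0 => j _; exact: sqr_ge0.
have -> : (n%:R * p%:R * K)%:E = (\sum_(i < n) (p%:R * K)%:E)%E.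
  rewrite sumEFin sumr_const card_ord; congr EFin; rewrite -[RHS]mulr_natl; ring.
apply: lee_sum => i _.
under eq_integral do rewrite -sumEFin.
rewrite ge0_integral_sum //; last 2 first.
- move=> j; apply/measurable_EFinP.
  under eq_fun do rewrite expr2; apply: measurable_funM; under eq_fun do rewrite mxE; exact: measurable_funPT.
- by move=> j w _; rewrite lee_fin sqr_ge0.
have -> : (p%:R * K)%:E = (\sum_(j < p) K%:E)%E.
  by rewrite sumEFin sumr_const card_ord mulr_natl.
apply: lee_sum => j _.
under eq_integral do rewrite mxE.
exact: hK.
Qed.

Lemma max_gt_meas n (f : 'I_n -> T -> R) c : 0 <= c ->
  (forall i, measurable [set w | c < f i w]) ->
  measurable [set w | c < \big[Num.max/0]_(i < n) f i w].
Proof.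
move=> c0 hf.
have -> : [set w | c < \big[Num.max/0]_(i < n) f i w] = \bigcup_(i : 'I_n) [set w | c < f i w].
  apply/seteqP; split => w /=.
  - move=> hc; apply: contrapT => hn.
    have hle : \big[Num.max/0]_(i < n) f i w <= c.
      apply: bigmax_le => // i _.
      by rewrite leNgt; apply/negP => hi; apply: hn; exists i.
    by move: hc; rewrite ltNge hle.
  - move=> [i _ hi]; apply: (lt_le_trans hi); exact: le_bigmax.
apply: countable_bigcupT_measurable => //; exact: countableP.
Qed.

End Main.
Section Det.
Variable R : realType.

Lemma sqFZ_bound n e p (Xn : 'M[R]_(n, e)) (G : 'M[R]_(e, p)) (Em : 'M[R]_(n, p)) (CX M' : R) :
  0 <= CX -> sqF Xn <= CX * n%:R -> sqF Em <= M' * n%:R ->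
  sqF (Ztilde Xn G Em) <= (1 + 2 * CX * sqF G + 2 * M') * n%:R.
Proof.
move=> CX0 hX hE; rewrite sqF_Ztilde.
have h1 := sqF_add (Xn *m G) Em.
have h2 := sqF_mul Xn G.
have h3 : sqF Xn * sqF G <= CX * n%:R * sqF G by rewrite ler_wpM2r // sqF_ge0.
have eq1 : (1 + 2 * CX * sqF G + 2 * M') * n%:R = n%:R + 2 * (CX * n%:R * sqF G) + 2 * (M' * n%:R) by ring.
rewrite eq1; lra.
Qed.

Lemma Y1_bound n e q (Z : 'M[R]_(n, q)) (Xn : 'M[R]_(n, e)) :
  opnorm (Z^T *m Xn) <= Num.sqrt (sqF Z * sqF Xn).
Proof.
apply: (le_trans (opnorm_le _)); rewrite ler_sqrt; last by rewrite mulr_ge0 // sqF_ge0.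
by rewrite -[sqF Z](sqF_tr Z); exact: sqF_mul.
Qed.

Lemma Y2_bound n e q (Z : 'M[R]_(n, q)) (Xn : 'M[R]_(n, e)) (i : 'I_n) :
  opnorm (Z^T *m Xn - (row' i Z)^T *m row' i Xn) <= Num.sqrt (sqF Z) * rnorm (row i Xn).
Proof.
rewrite outer_diff; apply: (le_trans (opnorm_le _)).
rewrite -(ger0_norm (rnorm_ge0 (row i Xn))) -sqrtr_sqr -sqrtrM ?sqF_ge0 // ler_sqrt; last first.
  by rewrite mulr_ge0 // ?sqF_ge0 // sqr_ge0.
rewrite rnorm_sq; apply: (le_trans (sqF_mul _ _)); rewrite sqF_tr.
by rewrite ler_wpM2r ?sqF_ge0 // sqF_row.
Qed.

Lemma sqF_trace n e (Xn : 'M[R]_(n, e)) : sqF Xn = \sum_l ((Xn^T *m Xn) l l).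
Proof.
rewrite /sqF exchange_big; apply: eq_bigr => l _; rewrite mxE.
by apply: eq_bigr => k _; rewrite mxE expr2.
Qed.

End Det.

Section Asym.
Variable R : realType.

Lemma sqFX_ev e (X : forall n : nat, 'M[R]_(n, e)) (Sigma : 'M[R]_e) :
  (forall j k, (fun n : nat => (n%:R)^-1 * ((X n)^T *m X n) j k) @ \oo --> Sigma j k) ->
  \forall n \near \oo, sqF (X n) <= (\sum_l (`|Sigma l l| + 1)) * n%:R.
Proof.
move=> hXX.
have h : \forall n \near \oo, forall l, (n%:R)^-1 * ((X n)^T *m X n) l l < `|Sigma l l| + 1.
  apply: filter_forall => l; apply: (cvgr_lt _ (hXX l l)).
  by rewrite (le_lt_trans (ler_norm _)) // ltrDl.
near=> n.
have n0 : (0 < n)%N by near: n; exact: nbhs_infty_gt.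
have hn : 0 < n%:R :> R by rewrite ltr0n.
rewrite sqF_trace mulr_suml; apply: ler_sum => l _.
have hl : forall l, (n%:R)^-1 * ((X n)^T *m X n) l l < `|Sigma l l| + 1.
  by near: n; exact: h.
have := hl l; set a := ((X n)^T *m X n) l l => hla.
have e1 : a = n%:R * (n%:R^-1 * a) by rewrite mulrA divff ?mul1r // lt0r_neq0.
by rewrite e1 [leRHS]mulrC ler_wpM2l ?(ltW hn) // ltW.
Unshelve. all: end_near.
Qed.

Lemma mx_ev (mx : nat -> R) (eta : R) : 0 < eta -> (forall n, 0 <= mx n) ->
  (fun n : nat => mx n / powR (n%:R) (3^-1)) @ \oo --> 0 ->
  \forall n \near \oo, mx n ^+ 2 <= eta ^+ 2 * n%:R.
Proof.
move=> eta0 mx0 hmx.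
have h : \forall n \near \oo, `|mx n / powR (n%:R) (3^-1)| < eta.
  exact: (cvgr0_norm_lt _ hmx).
near=> n.
have n0 : (0 < n)%N by near: n; exact: nbhs_infty_gt.
have n1 : 1 <= n%:R :> R by rewrite ler1n.
have hp : 0 < powR (n%:R) (3^-1) :> R by rewrite powR_gt0 // ltr0n.
have hlt : mx n < eta * powR (n%:R) (3^-1).
  have h1 : `|mx n / powR (n%:R) (3^-1)| < eta by near: n; exact: h.
  move: h1; rewrite ger0_norm ?divr_ge0 ?mx0 ?ltW //.
  by rewrite ltr_pdivrMr.
have hsq : mx n ^+ 2 <= (eta * powR (n%:R) (3^-1)) ^+ 2.
  by rewrite ler_pXn2r ?nnegrE ?mx0 ?mulr_ge0 ?ltW.
have hp2 : powR (n%:R) (3^-1) ^+ 2 <= n%:R :> R.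
  rewrite -powR_mulrn ?powR_ge0 // -powRrM; apply: ler1_powR => //.
  rewrite mulr_natr mulr2n; lra.
apply: (le_trans hsq); rewrite exprMn; apply: ler_wpM2l => //; exact: sqr_ge0.
Unshelve. all: end_near.
Qed.

End Asym.
Arguments normal_m2 {R}.
Arguments rv_m2 {d T R P}.
Arguments markov' {d T R P}.
Arguments G_int {d T R P n p}.
Arguments sqF_meas {d T R m k}.
Arguments mmeas_Emat {d T R P n p}.
Arguments mmeas_Z {d T R P n e p}.
Arguments P_mono {d T R P}.
Arguments max_gt_meas {d T R n}.
Arguments opnorm_gt_meas {d T R m k}.
Arguments meas_gt {d T R}.
Arguments sqFX_ev {R e X Sigma}.
Arguments mx_ev {R}.
Arguments sqFZ_bound {R n e p}.
Arguments Y1_bound {R n e q}.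
Arguments Y2_bound {R n e q}.
Theorem lemma4 (d : measure_display) (T : measurableType d) (R : realType)
  (P : probability T R) (e p : nat)
  (X : forall n : nat, 'M[R]_(n, e)) (Gamma : 'M[R]_(e, p))
  (sigma sigmaz : R) (lambda : nat -> R) (beta0 : nat -> 'cV[R]_e)
  (kappa : R) (alpha0 : 'cV[R]_e) (Sigma : 'M[R]_e) (Theta : 'rV[R]_e)
  (E : forall n : nat, 'I_n -> 'I_p -> {RV P >-> R})
  (eps : forall n : nat, 'I_n -> {RV P >-> R})
  (y : forall n : nat, T -> 'cV[R]_n) :
  0 < sigma -> 0 < sigmaz ->
  (forall n, 0 <= lambda n) ->
  (* y = X beta0 + epsilon *)
  (forall n w, y n w = X n *m beta0 n + \col_i eps n i w) ->
  (* entries of E i.i.d. N(0, sigmaz^2), of eps i.i.d. N(0, sigma^2),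
     E and eps independent *)
  (forall n i j A, measurable A ->
     distribution P (E n i j) A = normal_prob 0 sigmaz A) ->
  (forall n i A, measurable A ->
     distribution P (eps n i) A = normal_prob 0 sigma A) ->
  (forall n, mutually_independent
     (fun k : ('I_n * 'I_p) + 'I_n =>
        match k with inl ij => E n ij.1 ij.2 | inr i => eps n i end)) ->
  (* asymptotic assumptions *)
  0 <= kappa ->
  (fun n : nat => lambda n / n%:R) @ \oo --> kappa ->
  (forall j, (fun n : nat => Num.sqrt (n%:R) * beta0 n j 0) @ \oo --> alpha0 j 0) ->
  posdef Sigma ->
  (forall j k, (fun n : nat => (n%:R)^-1 * ((X n)^T *m X n) j k) @ \oo --> Sigma j k) ->
  (forall k, (fun n : nat => (n%:R)^-1 * ((const_mx 1 : 'rV[R]_n) *m X n) 0 k)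
                @ \oo --> Theta 0 k) ->
  (fun n : nat => (\big[Num.max/0]_(i < n) rnorm (row i (X n)))
                    / powR (n%:R) (3^-1)) @ \oo --> 0 ->
  OP_bound P (fun n w => opnorm ((Ztilde (X n) Gamma (Emat (E n) w))^T *m X n))
          (fun n => n%:R) /\
  oP_bound P (fun n w => \big[Num.max/0]_(i < n)
        opnorm ((Ztilde (X n) Gamma (Emat (E n) w))^T *m X n
                - (row' i (Ztilde (X n) Gamma (Emat (E n) w)))^T *m row' i (X n)))
          (fun n => n%:R).
Proof.
move=> hs hsz hl hy hE heps hind hk hlam hbeta hSig hXX hTh hmx.
have [K hK] := normal_m2 _ hsz.
have hEK : forall n i j, (\int[P]_w (((E n i j w) ^+ 2)%:E) <= K%:E)%E.
  by move=> n i j; apply: rv_m2 (hE n i j) hK.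
pose CX := \sum_l (`|Sigma l l| + 1).
have CX0 : 0 <= CX by apply: sumr_ge0 => l _; rewrite addr_ge0.
have hXev := sqFX_ev hXX.
pose G n w := sqF (Emat (E n) w).
have mG : forall n, measurable_fun setT (G n).
  by move=> n; apply: sqF_meas; exact: mmeas_Emat.
pose Mp (dl : R) := `|p%:R * K| / dl + 1.
have Mp0 : forall dl, 0 < dl -> 0 < Mp dl.
  by move=> dl dl0; rewrite /Mp ltr_pwDr // divr_ge0 // ltW.
have keyP : forall dl, 0 < dl -> forall n, (0 < n)%N ->
    (P [set w | (Mp dl * n%:R < G n w)%R] <= dl%:E)%E.
  move=> dl dl0 n n0.
  have hn : 0 < n%:R :> R by rewrite ltr0n.
  have c0 : 0 < Mp dl * n%:R by rewrite mulr_gt0 // Mp0.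
  have hm := markov' (G n) (Mp dl * n%:R) (n%:R * p%:R * K) (mG n) (fun w => sqF_ge0 _) c0 (G_int (E n) K (hEK n)).
  apply: (le_trans hm).
  rewrite lee_fin.
  have -> : (Mp dl * n%:R)^-1 * (n%:R * p%:R * K) = p%:R * K / Mp dl.
    by field; rewrite !lt0r_neq0 ?Mp0.
  rewrite ler_pdivrMr ?Mp0 //.
  apply: (le_trans (ler_norm _)).
  rewrite /Mp mulrDr mulr1 mulrCA divff ?lt0r_neq0 // mulr1; lra.
pose Z n w := Ztilde (X n) Gamma (Emat (E n) w).
have mZ : forall n, mmeas (Z n) by move=> n; exact: mmeas_Z.
pose D dl := 1 + 2 * CX * sqF Gamma + 2 * Mp dl.
have D1 : forall dl, 0 < dl -> 1 <= D dl.
  move=> dl dl0; have h1 := Mp0 dl dl0.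
  have h3 : 0 <= 2 * CX * sqF Gamma by rewrite !mulr_ge0 // sqF_ge0.
  rewrite /D; lra.
have hZb : forall dl n w, 0 < dl -> sqF (X n) <= CX * n%:R ->
    ~ (Mp dl * n%:R < G n w) -> sqF (Z n w) <= D dl * n%:R.
  move=> dl n w dl0 hXn hG; apply: sqFZ_bound => //.
  by rewrite leNgt; apply/negP.
split.
- move=> dl dl0.
  exists (Num.sqrt (D dl * CX) + 1); split; first by rewrite ltr_pwDr // sqrtr_ge0.
  near=> n.
  have n0 : (0 < n)%N by near: n; exact: nbhs_infty_gt.
  have hXn : sqF (X n) <= CX * n%:R by near: n; exact: hXev.
  apply: le_trans (keyP dl dl0 n n0).
  apply: P_mono.
  + apply: opnorm_gt_meas; last by rewrite mulr_ge0 // addr_ge0 // sqrtr_ge0.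
    by apply: mmeas_mul; [exact: mmeas_tr|exact: mmeas_cst].
  + exact: meas_gt.
  + move=> w /= hw; apply: contrapT => hG.
    move: hw; apply/negP; rewrite -leNgt.
    apply: (le_trans (Y1_bound _ _)).
    have hZ := hZb dl n w dl0 hXn hG.
    have hD := D1 dl dl0.
    apply: (@le_trans _ _ (Num.sqrt ((D dl * CX) * n%:R ^+ 2))).
      rewrite ler_sqrt; last by rewrite mulr_ge0 ?sqr_ge0 // mulr_ge0 //; lra.
      have -> : D dl * CX * n%:R ^+ 2 = (D dl * n%:R) * (CX * n%:R) by ring.
      apply: ler_pM => //; [exact: sqF_ge0|exact: sqF_ge0].
    rewrite sqrtrM ?sqrtr_sqr ?ger0_norm ?ler0n //; last by rewrite mulr_ge0 //; lra.
    by rewrite ler_wpM2r ?ler0n // lerDl.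
- move=> ep dl ep0 dl0.
  have hD := D1 dl dl0.
  have sD0 : 0 < Num.sqrt (D dl) by rewrite sqrtr_gt0; lra.
  pose eta := ep / Num.sqrt (D dl).
  have eta0 : 0 < eta by rewrite divr_gt0.
  pose mx n := \big[Num.max/0]_(i < n) rnorm (row i (X n)).
  have mx0 : forall n, 0 <= mx n by move=> n; exact: bigmax_ge_id.
  have hmxev := mx_ev mx eta eta0 mx0 hmx.
  near=> n.
  have n0 : (0 < n)%N by near: n; exact: nbhs_infty_gt.
  have hXn : sqF (X n) <= CX * n%:R by near: n; exact: hXev.
  have hmxn : mx n ^+ 2 <= eta ^+ 2 * n%:R by near: n; exact: hmxev.
  apply: le_trans (keyP dl dl0 n n0).
  apply: P_mono.
  + apply: max_gt_meas; first by rewrite mulr_ge0 // ltW.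
    move=> i; apply: opnorm_gt_meas; last by rewrite mulr_ge0 // ltW.
    apply: mmeas_add.
      by apply: mmeas_mul; [exact: mmeas_tr|exact: mmeas_cst].
    apply: mmeas_opp; apply: mmeas_mul; last exact: mmeas_cst.
    by apply: mmeas_tr; exact: mmeas_row'.
  + exact: meas_gt.
  + move=> w /= hw; apply: contrapT => hG.
    move: hw; apply/negP; rewrite -leNgt.
    have hZ := hZb dl n w dl0 hXn hG.
    apply: bigmax_le; first by rewrite mulr_ge0 // ltW.
    move=> i _; apply: (le_trans (Y2_bound _ _ i)).
    have hr : rnorm (row i (X n)) <= mx n by exact: (le_bigmax _ (fun i => rnorm (row i (X n))) i).
    apply: (@le_trans _ _ (Num.sqrt (D dl * n%:R) * mx n)).
      apply: ler_pM; [exact: sqrtr_ge0|exact: rnorm_ge0| |exact: hr].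
      by rewrite ler_sqrt // mulr_ge0 //; lra.
    rewrite -(ger0_norm (mx0 n)) -sqrtr_sqr -sqrtrM; last by rewrite mulr_ge0 //; lra.
    have hpos : 0 <= ep * n%:R by rewrite mulr_ge0 // ltW.
    rewrite -(ger0_norm hpos) -sqrtr_sqr ler_sqrt ?sqr_ge0 //.
    apply: (@le_trans _ _ (D dl * n%:R * (eta ^+ 2 * n%:R))).
      by apply: ler_wpM2l => //; rewrite mulr_ge0 //; lra.
    have -> : D dl * n%:R * (eta ^+ 2 * n%:R) = (D dl * eta ^+ 2) * n%:R ^+ 2 by ring.
    have -> : D dl * eta ^+ 2 = ep ^+ 2.
      rewrite /eta exprMn exprVn sqr_sqrtr; last lra.
      by field; lra.
    by rewrite exprMn.
Unshelve. all: end_near.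
Qed.
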